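(* Let $(M,\Sigma)$ be a measurable space, $r\ge1$, and $\mu_1,\dots,\mu_r$ non-atomic countably additive finite measures on $\Sigma$. For $k\ge1$ let $t(k)=k\bmod r$ if this is nonzero and $t(k)=r$ otherwise. Let $(H_k)_{k\ge1}$ be a sequence of measurable sets such that for every $k$: $H_k\subseteq M\setminus\bigcup_{i=1}^{k-1}H_i$, $H_k$ admits a strong solution (a partition $H_k=F_1\sqcup\dots\sqcup F_r$ with $\mu_i(F_i)\ge\mu_i(F_j)$ for all $i,j$), and $\mu_{t(k)}(H_k)\ge 2^{-(r-1)}\mu_{t(k)}\bigl(M\setminus\bigcup_{i=1}^{k-1}H_i\bigr)$. Let $M_\infty=M\setminus\bigcup_{i=1}^\infty H_i$. Then $\mu_j(M_\infty)=0$ for every $j\in\{1,\dots,r\}$. *)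

(* Defs.v *)
From HB Require Import structures.
From mathcomp Require Import all_boot all_order all_algebra.
From mathcomp Require Import all_classical all_reals all_analysis.
Set Implicit Arguments. Unset Strict Implicit. Unset Printing Implicit Defensive.
Import Order.TTheory GRing.Theory Num.Theory.
Local Open Scope classical_set_scope.
Local Open Scope ring_scope.

Definition nonatomic d (T : measurableType d) (R : realType)
  (mu : set T -> \bar R) : Prop :=
  forall A, measurable A -> (0 < mu A)%E ->
    exists2 B, measurable B /\ B `<=` A & (0 < mu B)%E /\ (mu B < mu A)%E.

Definition strong_solution d (T : measurableType d) (R : realType) (r : nat)
  (mu : nat -> set T -> \bar R) (H : set T) : Prop :=
  exists F : nat -> set T,
    [/\ (forall i, (1 <= i <= r)%N -> measurable (F i)),
        (forall i j, (1 <= i <= r)%N -> (1 <= j <= r)%N -> i != j ->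
            F i `&` F j = set0),
        H = \bigcup_(i in [set i | (1 <= i <= r)%N]) F i &
        (forall i j, (1 <= i <= r)%N -> (1 <= j <= r)%N ->
            (mu i (F j) <= mu i (F i))%E)].

Definition tidx (r k : nat) : nat := if (k %% r)%N != 0%N then (k %% r)%N else r.

Definition remaining (T : Type) (H : nat -> set T) (k : nat) : set T :=
  ~` (\bigcup_(i in [set i | (1 <= i < k)%N]) H i).

(* Main.v *)
Require Import Defs.
From HB Require Import structures.
From mathcomp Require Import all_boot all_order all_algebra.
From mathcomp Require Import all_classical all_reals all_analysis.
Import Order.TTheory GRing.Theory Num.Theory.
Local Open Scope classical_set_scope.
Local Open Scope ring_scope.

Theorem corollary3 (d : measure_display) (M : measurableType d) (R : realType)
  (r : nat) (mu : nat -> {finite_measure set M -> \bar R}) (H : nat -> set M) :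
  (1 <= r)%N ->
  (forall i, (1 <= i <= r)%N -> nonatomic (mu i)) ->
  (forall k, (1 <= k)%N ->
     [/\ measurable (H k),
         H k `<=` remaining H k,
         strong_solution r (fun i => (mu i : set M -> \bar R)) (H k) &
         (((2%:R : R) ^- r.-1)%:E * mu (tidx r k) (remaining H k)
            <= mu (tidx r k) (H k))%E]) ->
  forall j, (1 <= j <= r)%N ->
    mu j (~` (\bigcup_(i in [set i | (1 <= i)%N]) H i)) = 0%E.
Proof.
move=> r1 _ hH j /andP[j1 jr].
set Minf := ~` _.
pose A N := \bigcup_(i in [set i | (1 <= i < N)%N]) H i.
have measH k : (1 <= k)%N -> measurable (H k) by move=> /hH[].
have measA N : measurable (A N).
  by apply: bigcup_measurable => k /= /andP[k1 _]; exact: measH.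
have measMinf : measurable Minf.
  apply: measurableC; apply: bigcup_measurable => k /=; exact: measH.
have Msub k : Minf `<=` remaining H k.
  move=> x Mx [i /= /andP[i1 _] Hx]; apply: Mx; by exists i.
have Amono N N' : (N <= N')%N -> A N `<=` A N'.
  move=> NN x [i /= /andP[i1 iN] Hx]; exists i => //=.
  by rewrite i1 /= (leq_trans iN NN).
have AS N : (1 <= N)%N -> A N.+1 = A N `|` H N.
  move=> N1; apply/seteqP; split => x.
    move=> [i /= /andP[i1 iN] Hx]; rewrite ltnS leq_eqVlt in iN.
    case/orP: iN => [/eqP <-|iN]; first by right.
    by left; exists i => //=; rewrite i1.
  case=> [[i /= /andP[i1 iN] Hx]|Hx].
    by exists i => //=; rewrite i1 ltnW.
  by exists N => //=; rewrite N1 /=.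
have AD N : (1 <= N)%N -> A N `&` H N = set0.
  move=> N1; apply/seteqP; split => x // [Ax HNx].
  by have [_ /(_ x HNx) + _ _] := hH N N1.
have tj n : tidx r (j + n * r) = j.
  rewrite /tidx addnC modnMDl.
  move: jr; rewrite leq_eqVlt => /orP[/eqP ->|jr].
    by rewrite modnn.
  by rewrite modn_small // -lt0n j1.
pose c : R := (2%:R : R) ^- r.-1.
have c0 : 0 < c by rewrite /c invr_gt0 exprn_gt0.
have finj U : measurable U -> mu j U \is a fin_num.
  move=> mU; exact: fin_num_measure.
pose m := fine (mu j Minf).
have mE : mu j Minf = m%:E by rewrite fineK // finj.
have m0 : 0 <= m by rewrite -lee_fin -mE measure_ge0.
have key n : ((n%:R * (c * m))%:E <= mu j (A (j + n * r)%N))%E.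
  elim: n => [|n IH]; first by rewrite mul0r measure_ge0.
  have jn1 : (1 <= j + n * r)%N by rewrite (leq_trans j1) ?leq_addr.
  have NN : ((j + n * r).+1 <= j + n.+1 * r)%N.
    by rewrite mulSn addnCA addnC -[X in (X < _)%N]add0n ltn_add2r.
  apply: (le_trans _ (le_measure _ _ _ (Amono _ _ NN))); try by rewrite inE.
  rewrite (AS _ jn1) (measureU _ (measA _) (measH _ jn1) (AD _ jn1)).
  rewrite -nat1r mulrDl mul1r addrC EFinD leeD //.
  have [_ _ _ hc] := hH _ jn1.
  rewrite tj in hc.
  apply: le_trans hc; rewrite EFinM -mE lee_pmul2l ?lte_fin //.
  apply: le_measure; [by rewrite inE| rewrite inE; exact: (measurableC (measA _))| exact: Msub].
pose T := fine (mu j setT).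
have TE : mu j setT = T%:E by rewrite fineK // finj.
have bound n : n%:R * (c * m) <= T.
  rewrite -lee_fin -TE; apply: le_trans (key n) _.
  by apply: le_measure; rewrite ?inE.
have cm0 : c * m = 0.
  apply/eqP; rewrite eq_le mulr_ge0 ?(ltW c0) // andbT.
  rewrite leNgt; apply/negP => cmp.
  have T0 : 0 <= T / (c * m).
    rewrite divr_ge0 ?(ltW cmp) //; apply: le_trans (bound 0%N); by rewrite mul0r.
  have h1 := archi_boundP T0.
  rewrite ltr_pdivrMr in h1; last exact: cmp.
  have h2 := bound (Num.Def.archi_bound (T / (c * m))).
  by have := lt_le_trans h1 h2; rewrite ltxx.
rewrite mE; congr (_%:E).
by move/eqP: cm0; rewrite mulf_eq0 gt_eqF //= => /eqP.
Qed.
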